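(* Assume the setting below. Let $h=\max\{1,\lceil 8\kappa_Q^{1/2}C_A t_{\mathrm{mix}}/a\rceil\}$ and $\mathbf Y_1=(\mathrm I-\alpha\mathbf A(Z_h))(\mathrm I-\alpha\mathbf A(Z_{h-1}))\cdots(\mathrm I-\alpha\mathbf A(Z_1))$. Then for any $\alpha\in(0,\alpha^{(\mathrm M)}_\infty t_{\mathrm{mix}}^{-1}]$ and any initial probability measure $\xi$ on $(\mathsf Z,\mathcal Z)$, $\mathbb P_\xi$-almost surely, $$\|\mathbf Y_1-\mathbb E_\xi[\mathbf Y_1]\|_Q\le C_\sigma\,\alpha h,\qquad C_\sigma=2\bigl(\kappa_Q^{1/2}C_A+a/6\bigr).$$
   Context: Markov setting: $(\mathsf Z,\mathsf d_{\mathsf Z})$ is a Polish space with Borel $\sigma$-field $\mathcal Z$; $\mathrm P$ is a Markov kernel on $\mathsf Z\times\mathcal Z$ with invariant probability distribution $\pi$; for a probability measure $\xi$ on $\mathsf Z$, $(Z_k)_{k\ge0}$ denotes the Markov chain with kernel $\mathrm P$ and $Z_0\sim\xi$, with law $\mathbb P_\xi$ and expectation $\mathbb E_\xi$. For $k\ge1$, $\Delta(\mathrm P^k)=\sup_{z,z'\in\mathsf Z}\frac12\|\mathrm P^k(z,\cdot)-\mathrm P^k(z',\cdot)\|_{\mathrm{TV}}$ (total variation norm). Assume there is $t_{\mathrm{mix}}\in\mathbb N^*$ with $\Delta(\mathrm P^k)\le(1/4)^{\lfloor k/t_{\mathrm{mix}}\rfloor}$ for all $k\in\mathbb N^*$.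 LSA data: $d\ge1$; $\mathbf A:\mathsf Z\to\mathbb R^{d\times d}$ measurable with $\bar{\mathbf A}=\int\mathbf A\,d\pi$; $\|\cdot\|$ is the Euclidean/spectral norm; $-\bar{\mathbf A}$ is Hurwitz (all eigenvalues of $\bar{\mathbf A}$ have positive real part); $C_A:=\sup_z\|\mathbf A(z)\|\vee\sup_z\|\mathbf A(z)-\bar{\mathbf A}\|<\infty$. $Q$ is the unique symmetric positive definite solution of $\bar{\mathbf A}^\top Q+Q\bar{\mathbf A}=\mathrm I$; $\|x\|_Q=(x^\top Qx)^{1/2}$, $\|B\|_Q=\max_{\|x\|_Q=1}\|Bx\|_Q$; $\kappa_Q=\lambda_{\max}(Q)/\lambda_{\min}(Q)$; $a=1/(2\|Q\|)$; $\alpha_\infty=\min\{1/(2\|\bar{\mathbf A}\|_Q^2\|Q\|),\|Q\|\}$; and $$\alpha^{(\mathrm M)}_\infty=\min\Bigl\{\alpha_\infty,\ \kappa_Q^{-1/2}C_A^{-1},\ \frac{a}{6e\kappa_QC_A^2}\Bigr\}\Big/\bigl\lceil 8\kappa_Q^{1/2}C_A/a\bigr\rceil .$$ *)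

(* Defs.v *)
From HB Require Import structures.
From mathcomp Require Import all_boot all_order all_algebra.
From mathcomp Require Import all_classical all_reals all_analysis.
From mathcomp.real_closed Require Import complex.
Set Implicit Arguments.
Unset Strict Implicit.
Unset Printing Implicit Defensive.
Import Order.TTheory GRing.Theory Num.Theory.
Local Open Scope classical_set_scope.
Local Open Scope ring_scope.

Section Polish.
Context {R : realType} {dT : measure_display} {T : measurableType dT}.
Variable dist : T -> T -> R.

Definition is_metric : Prop :=
  [/\ forall x y, 0 <= dist x y,
      forall x y, dist x y = 0 <-> x = y,
      forall x y, dist x y = dist y x &
      forall x y z, dist x z <= dist x y + dist y z].

Definition dist_open (U : set T) : Prop :=
  forall x, U x -> exists2 r : R, 0 < r & [set y | dist x y < r] `<=` U.

Definition dist_cauchy (u : nat -> T) : Prop :=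
  forall e : R, 0 < e -> exists N : nat,
    forall m k, (N <= m)%N -> (N <= k)%N -> dist (u m) (u k) < e.

Definition dist_converges (u : nat -> T) : Prop :=
  exists l : T, forall e : R, 0 < e -> exists N : nat,
    forall m, (N <= m)%N -> dist (u m) l < e.

Definition dist_complete : Prop :=
  forall u : nat -> T, dist_cauchy u -> dist_converges u.

Definition dist_separable : Prop :=
  exists D : set T, countable D /\
    forall x (e : R), 0 < e -> exists2 y, D y & dist x y < e.

Definition dist_borel : Prop :=
  @measurable _ T = <<s dist_open >>.

Definition polish_borel : Prop :=
  [/\ is_metric, dist_complete, dist_separable & dist_borel].
End Polish.

Section Kernels.
Context {R : realType} {dT : measure_display} {T : measurableType dT}.
Variable P : R.-pker T ~> T.

Fixpoint kpow (k : nat) (z : T) (A : set T) : \bar R :=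
  match k with
  | 0 => (\1_A z)%:E
  | k'.+1 => (\int[P z]_y kpow k' y A)%E
  end.

Definition kinvariant (pi : probability T R) : Prop :=
  forall A, measurable A -> pi A = (\int[pi]_z P z A)%E.

Definition mpartition (s : seq (set T)) : Prop :=
  [/\ forall A, A \in s -> measurable A,
      forall i j, (i < size s)%N -> (j < size s)%N -> i <> j ->
        nth set0 s i `&` nth set0 s j = set0 &
      \big[setU/set0]_(A <- s) A = setT].

Definition tv_norm (mu nu : set T -> \bar R) : R :=
  sup [set x : R | exists2 s, mpartition s &
        x = \sum_(A <- s) `| fine (mu A) - fine (nu A) |].

Definition dobrushin (k : nat) : R :=
  sup [set x : R | exists z z' : T,
        x = 2^-1 * tv_norm (kpow k z) (kpow k z')].
End Kernels.

Section Chain.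
Context {R : realType} {dT : measure_display} {T : measurableType dT}.
Variable P : R.-pker T ~> T.

(* E[ prod_{i=m+1}^{m+n} 1_{A_i}(Z_i) | Z_m = z ] *)
Fixpoint fdd_from (A : nat -> set T) (m n : nat) (z : T) : \bar R :=
  match n with
  | 0 => 1%E
  | n'.+1 => (\int[P z]_y ((\1_(A m.+1) y)%:E * fdd_from A m.+1 n' y))%E
  end.

(* (Zs k)_k is a Markov chain with kernel P and Z_0 ~ xi on (Omega, Pr):
   all its finite-dimensional distributions are the ones of P_xi *)
Definition is_markov_chain {dO : measure_display} {Omega : measurableType dO}
  (Pr : probability Omega R) (Zs : nat -> Omega -> T) (xi : probability T R)
  : Prop :=
  (forall k, measurable_fun setT (Zs k)) /\
  forall (A : nat -> set T) (n : nat), (forall i, measurable (A i)) ->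
    Pr [set w | forall i, (i <= n)%N -> A i (Zs i w)] =
    (\int[xi]_z ((\1_(A 0%N) z)%:E * fdd_from A 0 n z))%E.
End Chain.

Section Mx.
Context {R : realType}.

Definition mx_expect {dT : measure_display} {T : measurableType dT}
  {m n : nat} (mu : {measure set T -> \bar R}) (F : T -> 'M[R]_(m, n))
  : 'M[R]_(m, n) :=
  \matrix_(i, j) fine (\int[mu]_x (F x i j)%:E)%E.

Definition vnorm {n : nat} (x : 'cV[R]_n) : R :=
  Num.sqrt (\sum_i x i 0 ^+ 2).

Definition mnorm {n : nat} (B : 'M[R]_n) : R :=
  sup [set vnorm (B *m x) | x in [set x : 'cV[R]_n | vnorm x = 1]].

Definition qvnorm {n : nat} (Q : 'M[R]_n) (x : 'cV[R]_n) : R :=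
  Num.sqrt ((x^T *m Q *m x) 0 0).

Definition qmnorm {n : nat} (Q B : 'M[R]_n) : R :=
  sup [set qvnorm Q (B *m x) | x in [set x : 'cV[R]_n | qvnorm Q x = 1]].

Definition lambda_max {n : nat} (Q : 'M[R]_n) : R :=
  sup [set a : R | eigenvalue Q a].
Definition lambda_min {n : nat} (Q : 'M[R]_n) : R :=
  inf [set a : R | eigenvalue Q a].

Definition sym_posdef {n : nat} (Q : 'M[R]_n) : Prop :=
  Q^T = Q /\ forall x : 'cV[R]_n, x != 0 -> 0 < (x^T *m Q *m x) 0 0.

(* -B is Hurwitz: every complex eigenvalue of B has positive real part *)
Definition neg_hurwitz {n : nat} (B : 'M[R]_n) : Prop :=
  forall l : R[i], eigenvalue (map_mx (fun x => Complex x 0) B) l ->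
    0 < complex.Re l.
End Mx.

Section Consts.
Context {R : realType} {dT : measure_display} {T : measurableType dT}.
Context {n : nat}.
Variables (pi : probability T R) (A : T -> 'M[R]_n.+1) (Q : 'M[R]_n.+1).

Definition Abar : 'M[R]_n.+1 := mx_expect pi A.

Definition CA_bounded : Prop :=
  has_ubound (range (fun z => mnorm (A z))) /\
  has_ubound (range (fun z => mnorm (A z - Abar))).

Definition C_A : R :=
  Num.max (sup (range (fun z => mnorm (A z))))
          (sup (range (fun z => mnorm (A z - Abar)))).

Definition kappa_Q : R := lambda_max Q / lambda_min Q.
Definition a_Q : R := 1 / (2 * mnorm Q).
Definition alpha_inf : R :=
  Num.min (1 / (2 * qmnorm Q Abar ^+ 2 * mnorm Q)) (mnorm Q).
Definition alphaM_inf : R :=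
  Num.min (Num.min alpha_inf ((Num.sqrt kappa_Q)^-1 * C_A^-1))
          (a_Q / (6 * expR 1 * kappa_Q * C_A ^+ 2))
  / (Num.ceil (8 * Num.sqrt kappa_Q * C_A / a_Q))%:~R.

Definition block_len (tmix : nat) : nat :=
  maxn 1 `|Num.ceil (8 * Num.sqrt kappa_Q * C_A * tmix%:R / a_Q)|%N.

Definition C_sigma : R := 2 * (Num.sqrt kappa_Q * C_A + a_Q / 6).
End Consts.

(* Main.v *)
Require Import Defs.
From HB Require Import structures.
From mathcomp Require Import all_boot all_order all_algebra.
From mathcomp Require Import all_classical all_reals all_analysis.
From mathcomp.real_closed Require Import complex.
From mathcomp Require Import ring lra.
Import Order.TTheory GRing.Theory Num.Theory.
Local Open Scope classical_set_scope.
Local Open Scope ring_scope.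


Section Bil.
Context {R : realType} {n : nat}.
Implicit Types (S : 'M[R]_n) (u v w x y : 'cV[R]_n).

Definition bil S u v : R := \sum_i \sum_j u i 0 * S i j * v j 0.

Lemma bilE S u v : (u^T *m S *m v) 0 0 = bil S u v.
Proof.
rewrite /bil mxE exchange_big; apply: eq_bigr => j _.
rewrite !mxE mulr_suml; apply: eq_bigr => i _; by rewrite !mxE.
Qed.

Lemma bil_mul S u v : bil S u v = \sum_i u i 0 * (S *m v) i 0.
Proof.
rewrite /bil; apply: eq_bigr => i _; rewrite mxE mulr_sumr.
by apply: eq_bigr => j _; rewrite mulrA.
Qed.

Lemma bilDl S u v w : bil S (u + v) w = bil S u w + bil S v w.
Proof.
rewrite /bil -big_split; apply: eq_bigr => i _; rewrite -big_split.
apply: eq_bigr => j _; rewrite !mxE /=; ring.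
Qed.

Lemma bilDr S u v w : bil S w (u + v) = bil S w u + bil S w v.
Proof.
rewrite /bil -big_split; apply: eq_bigr => i _; rewrite -big_split.
by apply: eq_bigr => j _; rewrite !mxE /=; ring.
Qed.

Lemma bilZl S c u v : bil S (c *: u) v = c * bil S u v.
Proof.
rewrite /bil mulr_sumr; apply: eq_bigr => i _; rewrite mulr_sumr.
by apply: eq_bigr => j _; rewrite !mxE /=; ring.
Qed.

Lemma bilZr S c u v : bil S u (c *: v) = c * bil S u v.
Proof.
rewrite /bil mulr_sumr; apply: eq_bigr => i _; rewrite mulr_sumr.
by apply: eq_bigr => j _; rewrite !mxE /=; ring.
Qed.

Lemma bilNl S u v : bil S (- u) v = - bil S u v.
Proof. by rewrite -scaleN1r bilZl mulN1r. Qed.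

Lemma bilBl S u v w : bil S (u - v) w = bil S u w - bil S v w.
Proof. by rewrite bilDl bilNl. Qed.

Lemma bil_lin S1 S2 c u v : bil (S1 - c *: S2) u v = bil S1 u v - c * bil S2 u v.
Proof.
rewrite /bil mulr_sumr -sumrB; apply: eq_bigr => i _; rewrite mulr_sumr -sumrB.
by apply: eq_bigr => j _; rewrite !mxE /=; ring.
Qed.

Lemma bil_sym S u v : S^T = S -> bil S u v = bil S v u.
Proof.
move=> HS; rewrite /bil exchange_big; apply: eq_bigr => i _.
apply: eq_bigr => j _.
have -> : S j i = S^T i j by rewrite mxE.
by rewrite HS; ring.
Qed.

Lemma bil1 u v : bil 1%:M u v = \sum_i u i 0 * v i 0.
Proof.
rewrite /bil; apply: eq_bigr => i _.
rewrite (bigD1 i) //= big1 ?addr0; first by rewrite !mxE eqxx mulr1n mulr1.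
by move=> j /negbTE nj; rewrite !mxE eq_sym nj mulr0n mulr0 mul0r.
Qed.

Lemma bil1_ge0 u : 0 <= bil 1%:M u u.
Proof. by rewrite bil1 sumr_ge0 // => i _; rewrite -expr2 sqr_ge0. Qed.

Lemma bil0l S v : bil S 0 v = 0.
Proof. by rewrite /bil big1 // => i _; rewrite big1 // => j _; rewrite mxE !mul0r. Qed.

Lemma quad_cs (a b c : R) : 0 <= a -> 0 <= c ->
  (forall t, 0 <= a + 2 * t * b + t ^+ 2 * c) -> b ^+ 2 <= a * c.
Proof.
move=> a0 c0 H.
have [c00|cn0] := eqVneq c 0.
  have [b00|bn0] := eqVneq b 0; first by rewrite b00 c00; lra.
  have := H (- (a + 1) / (2 * b)).
  rewrite c00 mulr0 addr0.
  have -> : 2 * (- (a + 1) / (2 * b)) * b = - (a + 1) by field; rewrite bn0.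
  lra.
have cp : 0 < c by rewrite lt_neqAle eq_sym cn0 c0.
have := H (- b / c).
have -> : a + 2 * (- b / c) * b + (- b / c) ^+ 2 * c = (a * c - b ^+ 2) / c
  by field.
rewrite pmulr_lge0 ?invr_gt0 //; lra.
Qed.

Lemma bil_cs S u v : S^T = S -> (forall x, 0 <= bil S x x) ->
  bil S u v ^+ 2 <= bil S u u * bil S v v.
Proof.
move=> HS Hp; apply: quad_cs => // t.
have := Hp (u + t *: v).
rewrite !bilDl !bilDr !bilZl !bilZr (bil_sym _ v u) //.
suff -> : bil S u u + t * bil S u v + (t * bil S u v + t * (t * bil S v v)) =
  bil S u u + 2 * t * bil S u v + t ^+ 2 * bil S v v by [].
ring.
Qed.

End Bil.


Section Spec.
Context {R : realType} {n : nat}.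
Implicit Types (S B : 'M[R]_n) (u v w x y : 'cV[R]_n).

Notation sq x := (bil 1%:M x x).

Lemma bil_lin2 S1 S2 c1 c2 u v :
  bil (c1 *: S1 - c2 *: S2) u v = c1 * bil S1 u v - c2 * bil S2 u v.
Proof.
rewrite /bil !mulr_sumr -sumrB; apply: eq_bigr => i _; rewrite !mulr_sumr -sumrB.
by apply: eq_bigr => j _; rewrite !mxE /=; ring.
Qed.

Lemma bil_as1 S u v : bil S u v = bil 1%:M u (S *m v).
Proof. by rewrite bil_mul bil1. Qed.

Lemma bil_delta S i v : bil S (delta_mx i 0) v = (S *m v) i 0.
Proof.
rewrite bil_mul (bigD1 i) //= big1 ?addr0; first by rewrite !mxE !eqxx /= mul1r.
by move=> j /negbTE nj; rewrite !mxE nj /= mul0r.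
Qed.

Lemma delta_col S i j : (S *m (delta_mx j 0 : 'cV[R]_n)) i 0 = S i j.
Proof.
rewrite mxE (bigD1 j) //= big1 ?addr0; first by rewrite !mxE !eqxx /= mulr1.
by move=> k /negbTE nk; rewrite !mxE nk /= mulr0.
Qed.

Lemma bil_ge0_1 : forall x, 0 <= bil (1%:M : 'M[R]_n) x x.
Proof. exact: bil1_ge0. Qed.

Lemma cs1 u v : bil 1%:M u v ^+ 2 <= sq u * sq v.
Proof. apply: bil_cs; [exact: trmx1 | exact: bil1_ge0]. Qed.

Definition frob B : R := \sum_i \sum_j B i j ^+ 2.

Lemma frob_ge0 B : 0 <= frob B.
Proof. by rewrite sumr_ge0 // => i _; rewrite sumr_ge0 // => j _; rewrite sqr_ge0. Qed.

Lemma sq_mul B y : sq (B *m y) <= frob B * sq y.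
Proof.
rewrite bil1 /frob mulr_suml; apply: ler_sum => i _.
pose r : 'cV[R]_n := \col_j B i j.
have -> : (B *m y) i 0 = bil 1%:M r y.
  by rewrite bil1 mxE; apply: eq_bigr => j _; rewrite mxE.
have -> : \sum_j B i j ^+ 2 = sq r.
  by rewrite bil1; apply: eq_bigr => j _; rewrite mxE expr2.
by rewrite -expr2 cs1.
Qed.

Lemma sq_eq0 x : sq x = 0 -> x = 0.
Proof.
rewrite bil1 => H; apply/matrixP => i j; rewrite (ord1 j) mxE.
have H2 : x i 0 * x i 0 = 0.
  by apply: (psumr_eq0P _ H) => // l _; rewrite -expr2 sqr_ge0.
by move/eqP: H2; rewrite mulf_eq0 orbb => /eqP.
Qed.

Lemma sq_gt0 x : x != 0 -> 0 < sq x.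
Proof.
move=> xn0; rewrite lt_neqAle bil1_ge0 andbT eq_sym.
by apply: contra xn0 => /eqP /sq_eq0 ->.
Qed.

Lemma psd_singular S : S^T = S -> (forall x, 0 <= bil S x x) ->
  (forall e, 0 < e -> exists x, sq x = 1 /\ bil S x x < e) -> \det S = 0.
Proof.
move=> HS Hp He; apply/eqP; apply/negPn/negP => dS.
have Su : S \in unitmx by rewrite unitmxE unitfE.
pose t := \sum_i S i i.
have Sii i : S i i = bil S (delta_mx i 0) (delta_mx i 0).
  by rewrite bil_delta delta_col.
have t0 : 0 <= t by rewrite sumr_ge0 // => i _; rewrite Sii Hp.
have key x : sq (S *m x) <= t * bil S x x.
  rewrite bil1 /t mulr_suml; apply: ler_sum => i _.
  rewrite -expr2 -bil_delta Sii; exact: bil_cs.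
have key2 x : sq x <= frob (invmx S) * t * bil S x x.
  have {1 2}-> : x = invmx S *m (S *m x) by rewrite mulKmx.
  apply: (le_trans (sq_mul _ _)); rewrite -mulrA ler_wpM2l ?frob_ge0 //.
pose K := frob (invmx S) * t.
have K0 : 0 <= K by rewrite mulr_ge0 // frob_ge0.
have e0 : 0 < 1 / (K + 1) by rewrite divr_gt0 //; lra.
have [x [x1 xe]] := He _ e0.
have := key2 x; rewrite x1 -/K => k1.
have q0 := Hp x.
move: xe; rewrite ltr_pdivlMr; last by lra.
nra.
Qed.

Lemma eig_col S mu : S^T = S -> eigenvalue S mu ->
  exists x, x != 0 /\ bil S x x = mu * sq x.
Proof.
move=> HS /eigenvalueP [v Hv vn0]; exists v^T; split.
  by apply: contra vn0 => /eqP; rewrite -trmx0 => /trmx_inj ->.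
rewrite bil_as1.
have -> : S *m v^T = mu *: v^T by rewrite -{1}HS -trmx_mul Hv linearZ.
by rewrite bilZr.
Qed.

Lemma det_eig S (a b : R) : \det (a *: 1%:M - b *: S) = 0 -> b != 0 -> eigenvalue S (a / b).
Proof.
move=> /eqP /det0P [v vn0 Hv] bn0; apply/eigenvalueP; exists v => //.
move: Hv; rewrite mulmxBr -scalemxAr mulmx1 -scalemxAr => /eqP; rewrite subr_eq0 => /eqP Hv.
apply: (@scalerI _ _ b) => //; by rewrite scalerA mulrC divfK // -Hv.
Qed.

Lemma normalize x : x != 0 -> exists x', sq x' = 1 /\
  forall S, bil S x x = sq x * bil S x' x'.
Proof.
move=> xn0; have s0 := sq_gt0 _ xn0.
pose c : R := (Num.sqrt (sq x))^-1.
have c2 : c * c * sq x = 1.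
  by rewrite /c -expr2 exprVn sqr_sqrtr ?mulVf ?gt_eqF // ltW.
have c3 b : sq x * (c * (c * b)) = b.
  by transitivity ((c * c * sq x) * b); [ring | rewrite c2 mul1r].
exists (c *: x); split.
  by rewrite bilZl bilZr mulrA.
by move=> S; rewrite bilZl bilZr c3.
Qed.

End Spec.


Section Spec2.
Context {R : realType} {n : nat}.
Implicit Types (S B Q : 'M[R]_n.+1) (u v w x y : 'cV[R]_n.+1).

Notation sq x := (bil 1%:M x x).

Definition e0 : 'cV[R]_n.+1 := delta_mx 0 0.

Lemma sq_e0 : sq e0 = 1.
Proof. by rewrite bil_delta mul1mx mxE !eqxx. Qed.

Lemma pd_ge0 Q : sym_posdef Q -> forall x, 0 <= bil Q x x.
Proof.
move=> [_ HQ] x; have [->|xn0] := eqVneq x 0; first by rewrite bil0l.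
by apply: ltW; rewrite -bilE HQ.
Qed.

Lemma pd_gt0 Q : sym_posdef Q -> forall x, x != 0 -> 0 < bil Q x x.
Proof. by move=> [_ HQ] x xn0; rewrite -bilE HQ. Qed.

Lemma sym_sub Q (a b : R) : Q^T = Q -> (a *: 1%:M - b *: Q)^T = a *: 1%:M - b *: Q.
Proof.
move=> HQ; apply/matrixP => i j; rewrite !mxE eq_sym.
have -> : Q j i = Q^T i j by rewrite mxE.
by rewrite HQ.
Qed.

Lemma ub_quad Q x : sq x = 1 -> bil Q x x <= 1 + frob Q.
Proof.
move=> x1; rewrite bil_as1.
have h1 := cs1 x (Q *m x); have h2 := sq_mul Q x.
rewrite x1 mul1r in h1; rewrite x1 mulr1 in h2.
have f0 := frob_ge0 Q.
set t := bil 1%:M x (Q *m x) in h1 *.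
have : t ^+ 2 <= frob Q by apply: le_trans h2.
nra.
Qed.

Definition Rq Q := [set bil Q x x | x in [set x | sq x = 1]].

Lemma spectral Q : sym_posdef Q ->
  [/\ 0 < lambda_min Q, lambda_min Q <= lambda_max Q,
      forall x, lambda_min Q * sq x <= bil Q x x &
      forall x, bil Q x x <= lambda_max Q * sq x].
Proof.
move=> HQ; have [HQs _] := HQ.
have ne : Rq Q !=set0 by exists (bil Q e0 e0); exists e0 => //; exact: sq_e0.
pose m := inf (Rq Q).
have hl : has_lbound (Rq Q) by exists 0 => _ [x _ <-]; exact: pd_ge0.
have m1 x : sq x = 1 -> m <= bil Q x x by move=> x1; apply: ge_inf => //; exists x.
have mx x : m * sq x <= bil Q x x.
  have [->|xn0] := eqVneq x 0; first by rewrite !bil0l mulr0.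
  have [x' [x1 H]] := normalize _ xn0.
  by rewrite (H Q) mulrC ler_wpM2l ?bil1_ge0 ?m1.
have em : eigenvalue Q m.
  have -> : m = (- m) / (- 1) by rewrite invrN invr1 mulrN1 opprK.
  apply: det_eig; last by rewrite oppr_eq0 oner_neq0.
  apply: psd_singular; first exact: sym_sub.
    by move=> x; rewrite bil_lin2; have := mx x; lra.
  move=> e ep; have [_ [x x1 <-] xe] := inf_adherent ep (conj ne hl).
  by exists x; split => //; rewrite bil_lin2 x1; lra.
have mpos : 0 < m.
  have [x [xn0 Hx]] := eig_col _ _ HQs em.
  have := pd_gt0 _ HQ _ xn0; have := sq_gt0 _ xn0; rewrite Hx; nra.
have mle mu : eigenvalue Q mu -> m <= mu.
  move=> emu; have [x [xn0 Hx]] := eig_col _ _ HQs emu.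
  have := mx x; rewrite Hx => h; have := sq_gt0 _ xn0; nra.
have lmin : lambda_min Q = m.
  apply/eqP; rewrite eq_le; apply/andP; split.
    by apply: ge_inf; [exists m => mu; exact: mle | exact: em].
  by apply: lb_le_inf; [exists m | move=> mu; exact: mle].
pose M := sup (Rq Q).
have hs : has_sup (Rq Q) by split => //; exists (1 + frob Q) => _ [x x1 <-]; exact: ub_quad.
have M1 x : sq x = 1 -> bil Q x x <= M by move=> x1; apply: sup_upper_bound => //; exists x.
have Mx x : bil Q x x <= M * sq x.
  have [->|xn0] := eqVneq x 0; first by rewrite !bil0l mulr0.
  have [x' [x1 H]] := normalize _ xn0.
  by rewrite (H Q) [M * _]mulrC ler_wpM2l ?bil1_ge0 ?M1.
have eM : eigenvalue Q M.
  have -> : M = M / 1 by rewrite divr1.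
  apply: det_eig; last exact: oner_neq0.
  apply: psd_singular; first exact: sym_sub.
    by move=> x; rewrite bil_lin2; have := Mx x; lra.
  move=> e ep; have [_ [x x1 <-] xe] := sup_adherent ep hs.
  by exists x; split => //; rewrite bil_lin2 x1 mulr1 mul1r; rewrite -/M in xe; lra.
have Mge mu : eigenvalue Q mu -> mu <= M.
  move=> emu; have [x [xn0 Hx]] := eig_col _ _ HQs emu.
  have := Mx x; rewrite Hx => h; have := sq_gt0 _ xn0; nra.
have lmax : lambda_max Q = M.
  apply/eqP; rewrite eq_le; apply/andP; split.
    by apply: ge_sup; [exists M | move=> mu; exact: Mge].
  by apply: sup_upper_bound => //; split; [exists M | exists M => mu; exact: Mge].
rewrite lmin lmax; split => //.
by apply: (le_trans (m1 _ sq_e0)); exact: M1 sq_e0.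
Qed.

End Spec2.


Lemma sup_ge0 {R : realType} (E : set R) : (forall x, E x -> 0 <= x) -> 0 <= sup E.
Proof.
move=> H; have [hs|nhs] := pselect (has_sup E); last by rewrite sup_out.
have [x Ex] := hs.1; apply: (le_trans (H x Ex)); exact: sup_upper_bound.
Qed.

Section Norms.
Context {R : realType} {n : nat}.
Implicit Types (S B Q M : 'M[R]_n.+1) (u v w x y : 'cV[R]_n.+1).

Notation sq x := (bil 1%:M x x).

Lemma vnormE x : vnorm x = Num.sqrt (sq x).
Proof. by rewrite /vnorm bil1; congr Num.sqrt; apply: eq_bigr => i _; rewrite expr2. Qed.

Lemma qvnormE Q x : qvnorm Q x = Num.sqrt (bil Q x x).
Proof. by rewrite /qvnorm bilE. Qed.

Lemma sqrt_eq1 (s : R) : 0 <= s -> Num.sqrt s = 1 -> s = 1.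
Proof. by move=> s0 h; rewrite -(sqr_sqrtr s0) h expr1n. Qed.

Lemma sqZ S c x : bil S (c *: x) (c *: x) = c ^+ 2 * bil S x x.
Proof. by rewrite bilZl bilZr mulrA expr2. Qed.

Lemma sqrtZ (c s : R) : Num.sqrt (c ^+ 2 * s) = `|c| * Num.sqrt s.
Proof. by rewrite sqrtrM ?sqr_ge0 // sqrtr_sqr. Qed.

Lemma vnormZ c x : vnorm (c *: x) = `|c| * vnorm x.
Proof. by rewrite !vnormE sqZ sqrtZ. Qed.

Lemma vnorm_ge0 x : 0 <= vnorm x.
Proof. by rewrite vnormE sqrtr_ge0. Qed.

Lemma mnorm_bound B x : vnorm (B *m x) <= mnorm B * vnorm x.
Proof.
have [->|xn0] := eqVneq x 0.
  by rewrite mulmx0 !vnormE !bil0l sqrtr0 mulr0.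
have s0 : 0 < vnorm x by rewrite vnormE sqrtr_gt0 sq_gt0.
pose x' := (vnorm x)^-1 *: x.
have x1 : vnorm x' = 1 by rewrite vnormZ ger0_norm ?invr_ge0 ?ltW // mulVf ?gt_eqF.
have hs : has_sup [set vnorm (B *m x) | x in [set x | vnorm x = 1]].
  split; first by exists (vnorm (B *m x')); exists x'.
  exists (Num.sqrt (frob B)) => _ [y y1 <-]; rewrite vnormE ler_sqrt ?frob_ge0 //.
  have := sq_mul B y; rewrite (@sqrt_eq1 (sq y)) ?bil1_ge0 ?mulr1 //.
  by rewrite -vnormE.
have h := sup_upper_bound hs (ex_intro2 _ _ x' x1 erefl).
have e : vnorm (B *m x') = (vnorm x)^-1 * vnorm (B *m x).
  by rewrite /x' -scalemxAr vnormZ ger0_norm // invr_ge0 ltW.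
have -> : vnorm (B *m x) = vnorm x * ((vnorm x)^-1 * vnorm (B *m x)).
  by rewrite mulrA divff ?gt_eqF ?mul1r.
rewrite [mnorm B * _]mulrC; apply: ler_wpM2l; first exact: ltW.
by rewrite -e; exact: h.
Qed.

Lemma mnorm_ge0 B : 0 <= mnorm B.
Proof. by apply: sup_ge0 => _ [y _ <-]; exact: vnorm_ge0. Qed.

Lemma qv_ge0 Q x : 0 <= qvnorm Q x.
Proof. by rewrite qvnormE sqrtr_ge0. Qed.

Lemma qvZ Q c x : qvnorm Q (c *: x) = `|c| * qvnorm Q x.
Proof. by rewrite !qvnormE sqZ sqrtZ. Qed.

Lemma qvN Q x : qvnorm Q (- x) = qvnorm Q x.
Proof. by rewrite -scaleN1r qvZ normrN normr1 mul1r. Qed.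

Lemma bil_le_qv Q u v : sym_posdef Q -> bil Q u v <= qvnorm Q u * qvnorm Q v.
Proof.
move=> HQ; have [HQs _] := HQ.
rewrite !qvnormE -sqrtrM ?pd_ge0 //.
apply: (le_trans (ler_norm _)); rewrite -sqrtr_sqr ler_sqrt ?mulr_ge0 ?pd_ge0 //.
apply: bil_cs => //; exact: pd_ge0.
Qed.

Lemma qv_tri Q u v : sym_posdef Q -> qvnorm Q (u + v) <= qvnorm Q u + qvnorm Q v.
Proof.
move=> HQ; have [HQs _] := HQ.
have h := bil_le_qv _ u v HQ.
rewrite -[leRHS]ger0_norm ?addr_ge0 ?qv_ge0 // -sqrtr_sqr qvnormE ler_sqrt ?sqr_ge0 //.
rewrite bilDl !bilDr (bil_sym _ v u) //.
have -> : bil Q u u = qvnorm Q u ^+ 2 by rewrite qvnormE sqr_sqrtr ?pd_ge0.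
have -> : bil Q v v = qvnorm Q v ^+ 2 by rewrite qvnormE sqr_sqrtr ?pd_ge0.
nra.
Qed.

Lemma qmnorm_le Q M c : 0 <= c -> (forall y, qvnorm Q (M *m y) <= c * qvnorm Q y) ->
  qmnorm Q M <= c.
Proof.
move=> c0 H; rewrite /qmnorm.
set E := [set _ | _ in _].
have [ne|ne] := pselect (E !=set0).
  by apply: ge_sup => // _ [y y1 <-]; have := H y; rewrite y1 mulr1.
have -> : E = set0 by apply/eqP; apply/negPn/negP => /set0P.
by rewrite sup0.
Qed.

Lemma qbound Q B x : sym_posdef Q ->
  qvnorm Q (B *m x) <= Num.sqrt (lambda_max Q / lambda_min Q) * mnorm B * qvnorm Q x.
Proof.
move=> HQ; have [lm0 lmM Hm HM] := spectral _ HQ.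
set lm := lambda_min Q in lm0 lmM Hm HM *; set lM := lambda_max Q in lmM HM *.
have lM0 : 0 <= lM by apply: ltW; apply: lt_le_trans lmM.
have h1 : qvnorm Q (B *m x) <= Num.sqrt lM * vnorm (B *m x).
  by rewrite qvnormE vnormE -sqrtrM // ler_sqrt ?mulr_ge0 ?bil1_ge0.
have h2 := mnorm_bound B x.
have h3 : Num.sqrt lm * vnorm x <= qvnorm Q x.
  rewrite qvnormE vnormE -sqrtrM; last exact: ltW.
  by rewrite ler_sqrt ?Hm //; exact: pd_ge0.
have slm : 0 < Num.sqrt lm by rewrite sqrtr_gt0.
rewrite sqrtrM // sqrtrV; last exact: ltW.
set il := (Num.sqrt lm)^-1.
have hil : il * Num.sqrt lm = 1 by rewrite mulVf ?gt_eqF.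
have il0 : 0 <= il by rewrite invr_ge0 ltW.
have h4 : vnorm x <= il * qvnorm Q x.
  by rewrite -[vnorm x]mul1r -hil -mulrA ler_wpM2l.
have mB0 := mnorm_ge0 B; have sM0 := sqrtr_ge0 lM.
apply: (le_trans h1).
have e1 : Num.sqrt lM * vnorm (B *m x) <= Num.sqrt lM * (mnorm B * vnorm x).
  by apply: ler_wpM2l.
apply: (le_trans e1).
have e3 : Num.sqrt lM * (mnorm B * vnorm x) <= Num.sqrt lM * (mnorm B * (il * qvnorm Q x)).
  by apply: ler_wpM2l => //; apply: ler_wpM2l.
apply: (le_trans e3); rewrite le_eqVlt; apply/orP; left; apply/eqP; ring.
Qed.

End Norms.


Section Integ.
Context {R : realType} {dO : measure_display} {Omega : measurableType dO}.
Variable Pr : probability Omega R.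

Lemma bounded_of (f : Omega -> R) (C : R) : (forall w, `|f w| <= C) ->
  [bounded f x | x in setT].
Proof.
move=> H; rewrite /bounded_near; near=> M => x _.
apply: (le_trans (H x)); near: M; apply: nbhs_pinfty_ge; exact: num_real.
Unshelve. all: end_near.
Qed.

Lemma integ_of (f : Omega -> R) (C : R) : measurable_fun setT f ->
  (forall w, `|f w| <= C) -> Pr.-integrable setT (EFin \o f).
Proof.
move=> mf H; apply: measurable_bounded_integrable => //.
  apply: (le_lt_trans (probability_le1 Pr measurableT)).
  exact: ltry.
exact: bounded_of H.
Qed.

Lemma Rint_sum (I : Type) (s : seq I) (f : I -> Omega -> R) :
  (forall i, Pr.-integrable setT (EFin \o f i)) ->
  Pr.-integrable setT (EFin \o (fun w => \sum_(i <- s) f i w)) /\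
  \int[Pr]_(w in setT) (\sum_(i <- s) f i w) = \sum_(i <- s) \int[Pr]_(w in setT) f i w.
Proof.
move=> Hf; elim: s => [|i s [IHi IHs]].
  have -> : (fun w => \sum_(i <- [::]) f i w) = cst 0 by apply/funext => w; rewrite big_nil.
  split; first exact: finite_measure_integrable_cst.
  by rewrite big_nil Rintegral_cst // mul0r.
have -> : (fun w => \sum_(j <- i :: s) f j w) = (fun w => f i w + \sum_(j <- s) f j w).
  by apply/funext => w; rewrite big_cons.
split.
  have -> : EFin \o (fun w => f i w + \sum_(j <- s) f j w) =
      ((EFin \o f i) \+ (EFin \o (fun w => (\sum_(j <- s) f j w)%R)))%E.
    by apply/funext.
  exact: integrableD.
by rewrite RintegralD // big_cons IHs.
Qed.

Lemma Rint_cst (c : R) : \int[Pr]_(w in setT) c = c.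
Proof.
rewrite Rintegral_cst // -[RHS]mulr1; congr (_ * _).
exact: (congr1 fine (probability_setT Pr)).
Qed.

End Integ.


Lemma pow_bound {R : realType} (x : R) (k : nat) : 0 <= x -> k%:R * x <= 1 ->
  (1 + x) ^+ k - 1 <= k%:R * x + (k%:R * x) ^+ 2.
Proof.
move=> x0; elim: k => [|k IH] h1; first by rewrite expr0 subrr mul0r expr0n /= addr0.
have k0 : (0 : R) <= k%:R by rewrite ler0n.
rewrite -natr1 in h1 *.
have h2 : k%:R * x <= 1 by nra.
have hp := IH h2; rewrite exprSr.
set p := (1 + x) ^+ k in hp *.
set K : R := k%:R in k0 h1 h2 hp *.
have e1 : (p - 1) * (1 + x) <= (K * x + (K * x) ^+ 2) * (1 + x).
  by apply: ler_wpM2r => //; lra.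
have e2 : (K * x) * (K * x ^+ 2) <= 1 * (K * x ^+ 2).
  by apply: ler_wpM2r => //; apply: mulr_ge0 => //; exact: sqr_ge0.
nra.
Qed.

Section Prod.
Context {R : realType} {n : nat}.

Lemma qv0 (Q : 'M[R]_n.+1) : qvnorm Q 0 = 0.
Proof. by rewrite qvnormE bil0l sqrtr0. Qed.

Lemma prod_bound (Q : 'M[R]_n.+1) (alpha b : R) (Bs : nat -> 'M[R]_n.+1) (k : nat) :
  sym_posdef Q -> 0 <= alpha -> 0 <= b ->
  (forall i y, qvnorm Q (Bs i *m y) <= b * qvnorm Q y) ->
  forall y, qvnorm Q ((\prod_(i < k) (1%:M - alpha *: Bs i)) *m y - y)
    <= ((1 + alpha * b) ^+ k - 1) * qvnorm Q y.
Proof.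
move=> HQ a0 b0 HB; elim: k => [|k IH] y.
  by rewrite big_ord0 mul1mx subrr qv0 expr0 subrr mul0r.
rewrite big_ord_recr /= -mulmxE -mulmxA.
set z := (1%:M - alpha *: Bs k) *m y.
have ez : z = y - alpha *: (Bs k *m y) by rewrite /z mulmxBl mul1mx scalemxAl.
have hBy := HB k y.
have qy0 := qv_ge0 Q y.
have hz : qvnorm Q (z - y) <= alpha * b * qvnorm Q y.
  rewrite ez addrAC subrr add0r qvN qvZ ger0_norm // -mulrA ler_wpM2l //.
have hz2 : qvnorm Q z <= (1 + alpha * b) * qvnorm Q y.
  have -> : z = y + (z - y) by rewrite addrC subrK.
  apply: (le_trans (qv_tri _ _ _ HQ)); lra.
have c0 : 0 <= (1 + alpha * b) ^+ k - 1.
  by rewrite subr_ge0 exprn_ege1 // lerDl mulr_ge0.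
have -> : (\prod_(i < k) (1%:M - alpha *: Bs i)) *m z - y =
  ((\prod_(i < k) (1%:M - alpha *: Bs i)) *m z - z) + (z - y).
  by rewrite addrA subrK.
apply: (le_trans (qv_tri _ _ _ HQ)).
have h1 := IH z.
have h2 : ((1 + alpha * b) ^+ k - 1) * qvnorm Q z <=
  ((1 + alpha * b) ^+ k - 1) * ((1 + alpha * b) * qvnorm Q y) by apply: ler_wpM2l.
rewrite exprSr.
set c := (1 + alpha * b) ^+ k in c0 h1 h2 *.
have e : (c * (1 + alpha * b) - 1) * qvnorm Q y =
  (c - 1) * ((1 + alpha * b) * qvnorm Q y) + alpha * b * qvnorm Q y by ring.
rewrite e; apply: lerD => //; exact: le_trans h1 h2.
Qed.

End Prod.


Section Expect.
Context {R : realType} {dO : measure_display} {Omega : measurableType dO}.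
Variable Pr : probability Omega R.
Context {n : nat}.

Lemma prod_meas (F : nat -> Omega -> 'M[R]_n.+1) (k : nat) :
  (forall m i j, measurable_fun setT (fun w => F m w i j)) ->
  forall i j, measurable_fun setT (fun w => (\prod_(m < k) F m w) i j).
Proof.
move=> HF; elim: k => [|k IH] i j.
  have -> : (fun w => (\prod_(m < 0) F m w) i j) = cst ((1%:M : 'M[R]_n.+1) i j).
    by apply/funext => w; rewrite big_ord0.
  exact: measurable_cst.
have -> : (fun w => (\prod_(m < k.+1) F m w) i j) =
   (fun w => \sum_l (\prod_(m < k) F m w) i l * F k w l j).
  by apply/funext => w; rewrite big_ord_recr /= -mulmxE mxE.
apply: measurable_sum => l; exact: measurable_realfun.measurable_funM.
Qed.

Lemma prod_bnd (F : nat -> Omega -> 'M[R]_n.+1) (K : R) (k : nat) : 0 <= K ->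
  (forall m w i j, `|F m w i j| <= K) ->
  exists C, 0 <= C /\ forall w i j, `|(\prod_(m < k) F m w) i j| <= C.
Proof.
move=> K0 HF; elim: k => [|k [C [C0 IH]]].
  exists 1; split => // w i j; rewrite big_ord0 mxE.
  by case: (i == j); rewrite ?normr1 ?normr0.
exists ((C * K) *+ n.+1); split; first by rewrite mulrn_wge0 // mulr_ge0.
move=> w i j; rewrite big_ord_recr /= -mulmxE mxE.
apply: (le_trans (ler_norm_sum _ _ _)).
have -> : (C * K) *+ n.+1 = \sum_(l < n.+1) (C * K).
  by rewrite sumr_const card_ord.
apply: ler_sum => l _; rewrite normrM.
apply: ler_pM => //; exact: normr_ge0.
Qed.

Lemma expect_bound (Q : 'M[R]_n.+1) (Y : Omega -> 'M[R]_n.+1) (y : 'cV[R]_n.+1) (r : R) :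
  sym_posdef Q -> 0 <= r ->
  (forall i j, measurable_fun setT (fun w => Y w i j)) ->
  (exists C, forall w i j, `|Y w i j| <= C) ->
  (forall w, qvnorm Q ((Y w - 1%:M) *m y) <= r * qvnorm Q y) ->
  qvnorm Q ((mx_expect Pr Y - 1%:M) *m y) <= r * qvnorm Q y.
Proof.
move=> HQ r0 HY [C HC] Hw.
set E := mx_expect Pr Y.
set u := (E - 1%:M) *m y.
set c := fun (i k : 'I_n.+1) => y k 0 * (Q *m u) i 0.
have lf M : bil Q (M *m y) u = \sum_i \sum_k M i k * c i k.
  rewrite bil_mul; apply: eq_bigr => i _; rewrite mxE mulr_suml.
  by apply: eq_bigr => k _; rewrite /c; ring.
have intY i k : Pr.-integrable setT (EFin \o (fun w => Y w i k * c i k)).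
  apply: (@integ_of _ _ _ _ _ (C * `|c i k|)).
    by apply: measurable_realfun.measurable_funM => //; exact: measurable_cst.
  by move=> w; rewrite normrM ler_wpM2r.
have intY2 i : Pr.-integrable setT (EFin \o (fun w => \sum_k Y w i k * c i k)).
  by have [] := Rint_sum Pr _ (index_enum 'I_n.+1) _ (intY i).
pose g := fun w => \sum_i \sum_k Y w i k * c i k.
have [intg Ig] := Rint_sum Pr _ (index_enum 'I_n.+1) _ intY2.
have IgE : \int[Pr]_(w in setT) g w = bil Q (E *m y) u.
  rewrite /g Ig lf; apply: eq_bigr => i _.
  have [_ ->] := Rint_sum Pr _ (index_enum 'I_n.+1) _ (intY i).
  apply: eq_bigr => k _; rewrite RintegralZr //; last first.
    apply: (@integ_of _ _ _ _ _ C) => //.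
  by rewrite mxE.
have qu0 := qv_ge0 Q u; have qy0 := qv_ge0 Q y.
have pw w : g w <= r * qvnorm Q y * qvnorm Q u + bil Q y u.
  have -> : g w = bil Q (Y w *m y) u by rewrite lf.
  have := bil_le_qv _ ((Y w - 1%:M) *m y) u HQ.
  rewrite mulmxBl mul1mx bilBl => h.
  have := Hw w => h2.
  have : qvnorm Q ((Y w - 1%:M) *m y) * qvnorm Q u <= r * qvnorm Q y * qvnorm Q u.
    by apply: ler_wpM2r.
  rewrite mulmxBl mul1mx; lra.
have Hle : \int[Pr]_(w in setT) g w <= r * qvnorm Q y * qvnorm Q u + bil Q y u.
  rewrite -[leRHS](Rint_cst Pr); apply: le_Rintegral => //.
  exact: finite_measure_integrable_cst.
have Huu : bil Q u u <= r * qvnorm Q y * qvnorm Q u.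
  have -> : bil Q u u = bil Q (E *m y) u - bil Q y u.
    by rewrite -bilBl {1}/u mulmxBl mul1mx.
  rewrite -IgE; lra.
have e : bil Q u u = qvnorm Q u ^+ 2 by rewrite qvnormE sqr_sqrtr // pd_ge0.
rewrite e in Huu.
have ry0 : 0 <= r * qvnorm Q y by rewrite mulr_ge0.
nra.
Qed.

End Expect.


Lemma int_nat (z : int) : (0 <= z)%R -> exists k : nat, z = k%:Z.
Proof. by case: z => // k _; exists k. Qed.

Lemma num_main {R : realType} (k CA a al : R) (tmix : nat) (alpha : R) :
  0 <= k -> 0 <= CA -> 0 <= a -> (0 < tmix)%N -> 0 < alpha ->
  alpha <= (Num.min (Num.min al ((Num.sqrt k)^-1 * CA^-1))
                    (a / (6 * expR 1 * k * CA ^+ 2))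
            / (Num.ceil (8 * Num.sqrt k * CA / a))%:~R) / tmix%:R ->
  let h := maxn 1 `|Num.ceil (8 * Num.sqrt k * CA * tmix%:R / a)|%N in
  [/\ (0 < h)%N, alpha * h%:R <= (Num.sqrt k)^-1 * CA^-1 &
      alpha * h%:R <= a / (6 * expR 1 * k * CA ^+ 2)].
Proof.
move=> k0 CA0 a0 t0 al0 Hal.
set m3 := Num.min _ _ in Hal.
set c0 := 8 * Num.sqrt k * CA / a in Hal.
have c00 : 0 <= c0 by rewrite /c0 !mulr_ge0 ?invr_ge0 ?sqrtr_ge0.
have [K0 eK] : exists K0 : nat, Num.ceil c0 = K0%:Z.
  apply: int_nat; rewrite ceil_ge0; lra.
have ct : 8 * Num.sqrt k * CA * tmix%:R / a = c0 * tmix%:R by rewrite /c0; ring.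
rewrite ct => h.
have ct0 : 0 <= c0 * tmix%:R by rewrite mulr_ge0.
have [j ej] : exists j : nat, Num.ceil (c0 * tmix%:R) = j%:Z.
  apply: int_nat; rewrite ceil_ge0; lra.
have tR : (0 : R) < tmix%:R by rewrite ltr0n.
rewrite eK in Hal.
have K1 : (0 < K0)%N.
  rewrite lt0n; apply/negP => /eqP K00; move: Hal; rewrite K00 /= mulr0z invr0 mulr0 mul0r.
  lra.
have KR : (0 : R) < K0%:R by rewrite ltr0n.
have hj : (j <= tmix * K0)%N.
  rewrite -(@ler_nat R) natrM.
  have : Num.ceil (c0 * tmix%:R) <= (tmix * K0)%N%:Z.
    rewrite ceil_le_int -pmulrn natrM mulrC.
    apply: ler_wpM2l; first exact: ltW.
    by rewrite pmulrn -eK ceil_ge.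
  by rewrite ej lez_nat -(@ler_nat R) natrM.
have hh : (h <= tmix * K0)%N.
  rewrite /h ej /= geq_max hj andbT.
  by rewrite muln_gt0 t0 K1.
have hR : (h%:R : R) <= tmix%:R * K0%:R by rewrite -natrM ler_nat.
have Hal' : alpha <= m3 / K0%:R / tmix%:R := Hal.
have am3 : alpha * h%:R <= m3.
  apply: (le_trans (ler_wpM2l (ltW al0) hR)).
  have : alpha * (tmix%:R * K0%:R) <= m3 / K0%:R / tmix%:R * (tmix%:R * K0%:R).
    by apply: ler_wpM2r => //; rewrite mulr_ge0 // ltW.
  have -> : m3 / K0%:R / tmix%:R * (tmix%:R * K0%:R) = m3.
    by field; rewrite !gt_eqF.
  by [].
split.
- by rewrite /h leq_max.
- by apply: (le_trans am3); rewrite /m3 ge_min; apply/orP; left; rewrite ge_min lexx orbT.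
- by apply: (le_trans am3); rewrite /m3 ge_min lexx orbT.
Qed.


Lemma entry_le_vnorm {R : realType} {n : nat} (x : 'cV[R]_n) i : `|x i 0| <= vnorm x.
Proof.
rewrite /vnorm -sqrtr_sqr ler_sqrt; last by rewrite sumr_ge0 // => j _; rewrite sqr_ge0.
rewrite (bigD1 i) //= lerDl sumr_ge0 // => j _; exact: sqr_ge0.
Qed.

Lemma entry_le_mnorm {R : realType} {n : nat} (B : 'M[R]_n.+1) i j : `|B i j| <= mnorm B.
Proof.
have := entry_le_vnorm (B *m (delta_mx j 0 : 'cV[R]_n.+1)) i.
rewrite delta_col => h; apply: (le_trans h); apply: (le_trans (mnorm_bound _ _)).
rewrite vnormE bil_delta mul1mx mxE !eqxx /= sqrtr1 mulr1 //.
Qed.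


Theorem lemma8
  (R : realType)
  (dZ : measure_display) (Z : measurableType dZ) (distZ : Z -> Z -> R)
  (HZ : polish_borel distZ)
  (P : R.-pker Z ~> Z) (pi : probability Z R) (Hinv : kinvariant P pi)
  (tmix : nat) (Htmix : (0 < tmix)%N)
  (Hmix : forall k : nat, (0 < k)%N ->
     dobrushin P k <= (4^-1 : R) ^+ (k %/ tmix))
  (n : nat) (A : Z -> 'M[R]_n.+1)
  (HAmeas : forall i j, measurable_fun setT (fun z => A z i j))
  (Hhur : neg_hurwitz (Abar pi A))
  (HCA : CA_bounded pi A)
  (Q : 'M[R]_n.+1) (HQ : sym_posdef Q)
  (HLyap : (Abar pi A)^T *m Q + Q *m Abar pi A = 1%:M)
  (alpha : R)
  (Halpha : 0 < alpha <= alphaM_inf pi A Q / tmix%:R)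
  (xi : probability Z R)
  (dO : measure_display) (Omega : measurableType dO)
  (Pr : probability Omega R) (Zs : nat -> Omega -> Z)
  (Hchain : is_markov_chain P Pr Zs xi) :
  let h := block_len pi A Q tmix in
  let Y1 := fun w : Omega =>
    \prod_(i < h) (1%:M - alpha *: A (Zs (h - i)%N w)) in
  {ae Pr, forall w : Omega,
     qmnorm Q (Y1 w - mx_expect Pr Y1) <= C_sigma pi A Q * alpha * h%:R}.
Proof.
move=> h Y1.
have [al0 alM] := andP Halpha.
have [lm0 lmM _ _] := spectral _ HQ.
have k0 : 0 <= kappa_Q Q.
  by rewrite /kappa_Q divr_ge0 // ltW //; apply: lt_le_trans lmM.
have CAz z : mnorm (A z) <= C_A pi A.
  rewrite /C_A le_max; apply/orP; left; apply: sup_upper_bound; last by exists z.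
  by split; [exists (mnorm (A z)); exists z | exact: HCA.1].
have CA0 : 0 <= C_A pi A.
  rewrite /C_A le_max; apply/orP; left; apply: sup_ge0 => _ [z _ <-]; exact: mnorm_ge0.
have a0 : 0 <= a_Q Q by rewrite /a_Q divr_ge0 // mulr_ge0 // mnorm_ge0.
set k := kappa_Q Q in k0 *.
set CA := C_A pi A in CAz CA0 *.
set a := a_Q Q in a0 *.
set b := Num.sqrt k * CA.
have b0 : 0 <= b by rewrite mulr_ge0 // sqrtr_ge0.
have Hb z y : qvnorm Q (A z *m y) <= b * qvnorm Q y.
  apply: (le_trans (qbound _ _ _ HQ)).
  apply: ler_wpM2r; first exact: qv_ge0.
  apply: ler_wpM2l; [exact: sqrtr_ge0 | exact: CAz].
have [hpos ah1 ah2] : [/\ (0 < h)%N, alpha * h%:R <= (Num.sqrt k)^-1 * CA^-1 &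
      alpha * h%:R <= a / (6 * expR 1 * k * CA ^+ 2)].
  exact: (num_main k CA a (alpha_inf pi A Q) tmix alpha k0 CA0 a0 Htmix al0 alM).
have ah0 : 0 <= alpha * h%:R by rewrite mulr_ge0 // ltW.
set s := alpha * h%:R * b.
have s1 : s <= 1.
  have [b00|bn0] := eqVneq b 0; first by rewrite /s b00 mulr0.
  have sk0 : Num.sqrt k != 0 by apply: contra bn0 => /eqP sk; rewrite /b sk mul0r.
  have CAn0 : CA != 0 by apply: contra bn0 => /eqP sk; rewrite /b sk mulr0.
  have := ler_wpM2r b0 ah1; rewrite /s.
  have -> : (Num.sqrt k)^-1 * CA^-1 * b = 1 by rewrite /b; field; rewrite sk0 CAn0.
  by [].
have b2 : b ^+ 2 = k * CA ^+ 2 by rewrite /b exprMn sqr_sqrtr.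
have e2 : 2 <= expR 1 :> R by have := @expR_ge1Dx R 1; lra.
have s2 : alpha * h%:R * b ^+ 2 <= a / 6.
  rewrite b2.
  have [kc0|kcn0] := eqVneq (k * CA ^+ 2) 0.
    by rewrite kc0 mulr0 divr_ge0.
  have kcp : 0 < k * CA ^+ 2 by rewrite lt_neqAle eq_sym kcn0 mulr_ge0 // sqr_ge0.
  have := ler_wpM2r (ltW kcp) ah2.
  have -> : a / (6 * expR 1 * k * CA ^+ 2) * (k * CA ^+ 2) = a / (6 * expR 1).
    have kn0 : k != 0 by apply: contra kcn0 => /eqP ->; rewrite mul0r.
    have cn0 : CA != 0 by apply: contra kcn0 => /eqP ->; rewrite expr0n mulr0.
    by field; rewrite kn0 cn0 gt_eqF ?expR_gt0.
  move=> h1; apply: (le_trans h1).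
  have : a / 6 - a / (6 * expR 1) = a * (expR 1 - 1) / (6 * expR 1).
    by field; rewrite gt_eqF //; lra.
  have : 0 <= a * (expR 1 - 1) / (6 * expR 1).
    by apply: divr_ge0; apply: mulr_ge0 => //; lra.
  lra.
set r := (1 + alpha * b) ^+ h - 1.
have r0 : 0 <= r by rewrite /r subr_ge0 exprn_ege1 // lerDl mulr_ge0 // ltW.
have rs : r <= s + s ^+ 2.
  have := @pow_bound R (alpha * b) h (mulr_ge0 (ltW al0) b0).
  have -> : h%:R * (alpha * b) = s by rewrite /s; ring.
  by move=> /(_ s1).
have final : 2 * r <= C_sigma pi A Q * alpha * h%:R.
  rewrite /C_sigma -/k -/CA -/a.
  have : s ^+ 2 <= alpha * h%:R * (a / 6).
    have -> : s ^+ 2 = alpha * h%:R * (alpha * h%:R * b ^+ 2) by rewrite /s; ring.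
    exact: ler_wpM2l.
  have -> : 2 * (Num.sqrt k * CA + a / 6) * alpha * h%:R =
    2 * s + 2 * (alpha * h%:R * (a / 6)) by rewrite /s /b; ring.
  lra.
have HYw w : forall y, qvnorm Q ((Y1 w - 1%:M) *m y) <= r * qvnorm Q y.
  move=> y; have := prod_bound Q alpha b (fun i => A (Zs (h - i)%N w)) h HQ (ltW al0) b0
    (fun i y => Hb _ y) y.
  by rewrite mulmxBl mul1mx.
have Hm m i j : measurable_fun setT (fun w => (1%:M - alpha *: A (Zs (h - m)%N w)) i j).
  have -> : (fun w => (1%:M - alpha *: A (Zs (h - m)%N w)) i j) =
    (fun w => (1%:M : 'M[R]_n.+1) i j - alpha * A (Zs (h - m)%N w) i j).
    by apply/funext => w'; rewrite !mxE.
  apply: measurable_realfun.measurable_funB; first exact: measurable_cst.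
  apply: measurable_realfun.measurable_funM; first exact: measurable_cst.
  apply: (measurableT_comp (f := fun z => A z i j)); [exact: HAmeas | exact: Hchain.1].
have Hmeas i j : measurable_fun setT (fun w => Y1 w i j).
  exact: (prod_meas (fun m w => 1%:M - alpha *: A (Zs (h - m)%N w)) h Hm i j).
have Hbnd : exists C, forall w i j, `|Y1 w i j| <= C.
  have K0 : 0 <= 1 + alpha * CA by rewrite addr_ge0 // mulr_ge0 // ltW.
  have HF : forall m w i j, `|(1%:M - alpha *: A (Zs (h - m)%N w)) i j| <= 1 + alpha * CA.
    move=> m w i j; rewrite !mxE.
    apply: (le_trans (ler_normB _ _)); apply: lerD.
      by case: (i == j); rewrite ?normr1 ?normr0.
    rewrite normrM (ger0_norm (ltW al0)); apply: ler_wpM2l; first exact: ltW.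
    apply: (le_trans (entry_le_mnorm _ _ _)); exact: CAz.
  have [C [_ HC]] := prod_bnd (fun m w => 1%:M - alpha *: A (Zs (h - m)%N w)) (1 + alpha * CA) h K0 HF.
  by exists C.
apply: aeW => w.
apply: qmnorm_le.
  by apply: le_trans final; rewrite mulr_ge0.
move=> y.
have HE := expect_bound Pr Q Y1 y r HQ r0 Hmeas Hbnd (fun w' => HYw w' y).
have -> : (Y1 w - mx_expect Pr Y1) *m y =
  (Y1 w - 1%:M) *m y + (- ((mx_expect Pr Y1 - 1%:M) *m y)).
  by rewrite -mulNmx -mulmxDl opprB addrA subrK.
apply: (le_trans (qv_tri _ _ _ HQ)); rewrite qvN.
have := HYw w y; have := qv_ge0 Q y => q0 h1.
have := ler_wpM2r q0 final => h2.
nra.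
Qed.
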